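(* Let $C$ be a convex cone in $\mathbb{R}^n$ (usual topology) and $f:C\to\mathbb{R}$ a non-negative function that is positively homogeneous of degree $\alpha>0$. If $f$ is sub-convex, then $f$ is continuous on $\mathrm{ri}(C)$.
   Context: A cone is a subset $C$ with $\lambda C\subseteq C$ for all $\lambda>0$. $f$ is positively homogeneous of degree $\alpha$ if $f(\lambda x)=\lambda^{\alpha}f(x)$ for $x\in C$, $\lambda>0$. $f$ is sub-convex if every sublevel set $S_r(f)=\{x\in C: f(x)\le r\}$, $r\in\mathbb{R}$, is convex. $\mathrm{ri}(C)$ is the interior of $C$ relative to its affine hull. *)

(* Defs.v *)
From HB Require Import structures.
From mathcomp Require Import all_boot all_order all_algebra.
From mathcomp Require Import all_classical all_reals all_analysis.
Set Implicit Arguments. Unset Strict Implicit. Unset Printing Implicit Defensive.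
Import Order.TTheory GRing.Theory Num.Theory.
Import numFieldNormedType.Exports.
Local Open Scope classical_set_scope.
Local Open Scope ring_scope.

(* R^n is modelled as row vectors 'rV[R]_n, with its canonical normed topology
   (equivalent to the usual Euclidean topology). *)

Definition is_cone (R : realType) (n : nat) (C : set 'rV[R]_n) : Prop :=
  forall (lambda : R) x, 0 < lambda -> C x -> C (lambda *: x).

Definition is_convex (R : realType) (n : nat) (C : set 'rV[R]_n) : Prop :=
  convex_set (C : set (convex_lmodType 'rV[R]_n)).

Definition pos_homogeneous (R : realType) (n : nat) (C : set 'rV[R]_n)
    (alpha : R) (f : 'rV[R]_n -> R) : Prop :=
  forall (lambda : R) x, 0 < lambda -> C x ->
    f (lambda *: x) = powR lambda alpha * f x.

Definition sublevel (R : realType) (n : nat) (C : set 'rV[R]_n)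
    (f : 'rV[R]_n -> R) (r : R) : set 'rV[R]_n :=
  [set x | C x /\ f x <= r].

Definition sub_convex (R : realType) (n : nat) (C : set 'rV[R]_n)
    (f : 'rV[R]_n -> R) : Prop :=
  forall r : R, is_convex (sublevel C f r).

Definition affine_hull (R : realType) (n : nat) (C : set 'rV[R]_n)
    : set 'rV[R]_n :=
  [set x | exists (k : nat) (p : 'I_k -> 'rV[R]_n) (w : 'I_k -> R),
      (forall i, C (p i)) /\ \sum_(i < k) w i = 1 /\
      x = \sum_(i < k) w i *: p i].

Definition rel_interior (R : realType) (n : nat) (C : set 'rV[R]_n)
    : set 'rV[R]_n :=
  [set x | C x /\ exists2 e : R, 0 < e &
      ball x e `&` affine_hull C `<=` C].

(* Main.v *)
Require Import Defs.
From HB Require Import structures.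
From mathcomp Require Import all_boot all_order all_algebra.
From mathcomp Require Import all_classical all_reals all_analysis.
From mathcomp Require Import ring lra.
Import Order.TTheory GRing.Theory Num.Theory.
Import numFieldNormedType.Exports.
Local Open Scope classical_set_scope.
Local Open Scope ring_scope.

Section S.
Variables (R : realType) (n : nat).

Lemma convP (S : set 'rV[R]_n) : is_convex S -> forall a b (l : R),
  S a -> S b -> 0 <= l -> l <= 1 -> S (l *: a + (1 - l) *: b).
Proof.
move=> cS a b l Sa Sb l0 l1.
have := cS a b (Itv01 l0 l1); rewrite !inE => /(_ Sa Sb).
by [].
Qed.


Lemma fin_conv (S : set 'rV[R]_n) : is_convex S -> forall m (w : 'I_m -> R)
  (p : 'I_m -> 'rV[R]_n), (forall i, 0 <= w i) -> \sum_i w i = 1 ->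
  (forall i, S (p i)) -> S (\sum_i w i *: p i).
Proof.
move=> cS; elim=> [|m IH] w p w0 w1 Sp.
  by move: w1; rewrite big_ord0 => /eqP; rewrite eq_sym oner_eq0.
rewrite big_ord_recr /=; move: w1; rewrite big_ord_recr /=.
set W := \sum_(i < m) w (widen_ord (leqnSn m) i) => w1.
have W0 : 0 <= W by rewrite sumr_ge0.
have [W00|Wp] := eqVneq W 0.
  have wz : forall i : 'I_m, w (widen_ord (leqnSn m) i) = 0.
    move=> i; apply/eqP; move/eqP: W00; rewrite psumr_eq0 // => /allP.
    by move/(_ i); rewrite mem_index_enum => /(_ isT) /implyP /(_ isT).
  rewrite big1 ?add0r; last by move=> i _; rewrite wz scale0r.
  have -> : w ord_max = 1 by rewrite -w1 W00 add0r.
  by rewrite scale1r.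
have Wpos : 0 < W by rewrite lt_neqAle eq_sym Wp.
have Sq := IH (fun i => w (widen_ord (leqnSn m) i) / W) (fun i => p (widen_ord (leqnSn m) i))
  (fun i => divr_ge0 (w0 _) W0) ltac:(by rewrite -mulr_suml mulfV) (fun i => Sp _).
have := @convP S cS _ _ _ Sq (Sp ord_max) W0 ltac:(by rewrite -w1 lerDl).
move=> H; rewrite [X in S X](_ : _ = W *: \sum_i ((w (widen_ord (leqnSn m) i) / W) *:
   p (widen_ord (leqnSn m) i)) + (1 - W) *: p ord_max) //.
rewrite scaler_sumr -w1 [W + _]addrC addrK; congr (_ + _).
apply: eq_bigr => i _; rewrite scalerA; congr (_ *: _); rewrite mulrCA mulfV ?mulr1 //.
Qed.
Lemma Qlem (C : set 'rV[R]_n) (f : 'rV[R]_n -> R) (alpha : R) :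
  is_cone C -> (forall x, C x -> 0 <= f x) -> 0 < alpha ->
  pos_homogeneous C alpha f -> sub_convex C f ->
  forall x y l s t, C x -> C y -> 0 <= l -> l <= 1 -> 0 < s -> 0 < t ->
  f x <= s `^ alpha -> f y <= t `^ alpha ->
  f (l *: x + (1 - l) *: y) <= (l * s + (1 - l) * t) `^ alpha.
Proof.
move=> cone f0 a0 hom sc x y l s t Cx Cy l0 l1 s0 t0 fx fy.
set u := l * s + (1 - l) * t.
have u0 : 0 < u.
  rewrite /u; have [->|lpos] := eqVneq l 0; first by rewrite mul0r add0r subr0 mul1r.
  have lp : 0 < l by rewrite lt_neqAle eq_sym lpos l0.
  by rewrite ltr_wpDr ?mulr_ge0 ?subr_ge0 ?(ltW t0) ?mulr_gt0.
have key : forall z r, C z -> 0 < r -> f z <= r `^ alpha ->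
    sublevel C f 1 (r^-1 *: z).
  move=> z r Cz r0 fz; split; first by apply: cone; rewrite ?invr_gt0.
  rewrite hom ?invr_gt0 //.
  have -> : 1 = r^-1 `^ alpha * r `^ alpha.
    by rewrite -powRM ?invr_ge0 ?(ltW r0) // mulVf ?gt_eqF // powR1.
  by rewrite ler_wpM2l // powR_ge0.
have Sx := key x s Cx s0 fx.
have Sy := key y t Cy t0 fy.
set mu := l * s / u.
have mu0 : 0 <= mu by rewrite /mu divr_ge0 ?mulr_ge0 ?(ltW s0) ?(ltW u0).
have mu1 : mu <= 1.
  rewrite /mu ler_pdivrMr // mul1r /u lerDl mulr_ge0 ?subr_ge0 ?(ltW t0) //.
have := @convP _ (sc 1) _ _ _ Sx Sy mu0 mu1.
have -> : mu *: (s^-1 *: x) + (1 - mu) *: (t^-1 *: y) =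
          u^-1 *: (l *: x + (1 - l) *: y).
  rewrite !scalerA scalerDr !scalerA; congr (_ *: _ + _ *: _).
    by rewrite /mu; field; rewrite ?gt_eqF.
  rewrite /mu /u; field; rewrite -/u ?gt_eqF //.
case=> Cz fz.
have -> : l *: x + (1 - l) *: y = u *: (u^-1 *: (l *: x + (1 - l) *: y)).
  by rewrite scalerA mulfV ?gt_eqF // scale1r.
rewrite hom //.
by rewrite -[X in _ <= X]mulr1 ler_wpM2l // powR_ge0.
Qed.
Lemma norm_entry (v : 'rV[R]_n) i : `|v 0 i| <= `|v|.
Proof.
rewrite [X in _ <= X]mx_normrE.
exact: (le_bigmax 0 (fun ij : 'I_1 * 'I_n => `|v ij.1 ij.2|) (0, i)).
Qed.

Lemma aff2 (C : set 'rV[R]_n) a b s : C a -> C b ->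
  affine_hull C ((1 - s) *: a + s *: b).
Proof.
move=> Ca Cb.
exists 2%N, (fun i : 'I_2 => if val i == 0%N then a else b),
  (fun i : 'I_2 => if val i == 0%N then 1 - s else s).
split; first by move=> i; case: ifP.
by rewrite !big_ord_recl !big_ord0 /= !addr0 subrK.
Qed.

Definition Dm (x : 'rV[R]_n) m (q : nat -> 'rV[R]_n) : 'M[R]_(m, n) :=
  \matrix_(i < m) (q i - x).

Lemma maxfam (C : set 'rV[R]_n) x : exists m (q : nat -> 'rV[R]_n),
  (forall i, (i < m)%N -> C (q i)) /\
  forall p, C p -> ((p - x) <= Dm x m q)%MS.
Proof.
pose P k := exists m (q : nat -> 'rV[R]_n),
  (forall i, (i < m)%N -> C (q i)) /\ \rank (Dm x m q) = k.
have exP : exists k, `[< P k >].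
  exists 0%N; apply/asboolP; exists 0%N, (fun=> x); split => // .
  by rewrite flatmx0 mxrank0.
have ubP : forall k, `[< P k >] -> (k <= n)%N.
  by move=> k /asboolP [m [q [_ <-]]]; exact: rank_leq_col.
case: (ex_maxnP exP ubP) => k /asboolP [m [q [Cq rk]]] kmax.
exists m, q; split => // p Cp.
case: (boolP ((p - x) <= Dm x m q)%MS) => // Hn.
pose q' := fun i => if i == m then p else q i.
have Cq' : forall i, (i < m.+1)%N -> C (q' i).
  move=> i; rewrite ltnS leq_eqVlt /q' => /orP [/eqP ->|im]; first by rewrite eqxx.
  by rewrite (ltn_eqF im); apply: Cq.
have sub1 : (Dm x m q <= Dm x m.+1 q')%MS.
  apply/row_subP => i.
  have -> : row i (Dm x m q) = row (widen_ord (leqnSn m) i) (Dm x m.+1 q').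
    by rewrite /Dm !rowK /q' /= (ltn_eqF (ltn_ord i)).
  exact: row_sub.
have sub2 : ((p - x) <= Dm x m.+1 q')%MS.
  have -> : p - x = row ord_max (Dm x m.+1 q') by rewrite /Dm rowK /q' /= eqxx.
  exact: row_sub.
have lt : (\rank (Dm x m q) < \rank (Dm x m.+1 q'))%N.
  have [le eq] := mxrank_leqif_sup sub1.
  rewrite ltn_neqAle le andbT eq; apply/negP => sub3.
  by move: Hn; rewrite (submx_trans sub2 sub3).
have : (\rank (Dm x m.+1 q') <= k)%N.
  by apply: kmax; apply/asboolP; exists m.+1, q'; split.
by rewrite -rk leqNgt lt.
Qed.

Lemma single_le (m : nat) (F : 'I_m -> R) j : (forall i, 0 <= F i) ->
  F j <= \sum_i F i.
Proof.
by move=> F0; rewrite (bigD1 j) //= lerDl sumr_ge0.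
Qed.

Lemma coord_bound (m : nat) (P : 'M[R]_(n, m)) : exists K, 0 <= K /\
  forall (v : 'rV[R]_n) i, `|(v *m P) 0 i| <= K * `|v|.
Proof.
exists (\sum_i \sum_j `|P j i|); split; first by do 2! apply: sumr_ge0 => ? _.
move=> v i; rewrite mxE.
apply: (le_trans (ler_norm_sum _ _ _)).
apply: (@le_trans _ _ (\sum_j `|v| * `|P j i|)).
  apply: ler_sum => j _; rewrite normrM ler_wpM2r // norm_entry //.
rewrite -mulr_sumr mulrC ler_wpM2r //.
have := @single_le m (fun k => \sum_j `|P j k|) i; apply => k; exact: sumr_ge0.
Qed.

Lemma FactA (C : set 'rV[R]_n) x e : C x ->
  (ball x e `&` affine_hull C `<=` C) ->
  forall p s, C p -> `|s| * `|p - x| < e -> C (x + s *: (p - x)).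
Proof.
move=> Cx sub p s Cp lt; apply: sub; split.
  by rewrite -ball_normE /ball_ /= opprD addrA subrr add0r normrN normrZ.
have -> : x + s *: (p - x) = (1 - s) *: x + s *: p.
  by rewrite scalerBr scalerBl scale1r addrAC addrA.
exact: aff2.
Qed.

Lemma lin2 (x d : 'rV[R]_n) a b c e :
  a *: (x + b *: d) + c *: (x + e *: d) = (a + c) *: x + (a * b + c * e) *: d.
Proof.
by rewrite !scalerDr !scalerA scalerDl scalerDl addrACA.
Qed.

Lemma upper_bound (C : set 'rV[R]_n) (f : 'rV[R]_n -> R) x e :
  (forall x, C x -> 0 <= f x) -> sub_convex C f ->
  C x -> 0 < e -> (ball x e `&` affine_hull C `<=` C) ->
  exists rho B, 0 < rho /\ forall z, C z -> `|z - x| < rho -> f z <= B.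
Proof.
move=> f0 sc Cx e0 sub.
have [m [q [Cq span]]] := maxfam C x.
pose d (i : 'I_m) := q i - x.
pose T := \sum_i `|d i| + 1.
have T0 : 0 < T by rewrite /T ltr_pwDr // sumr_ge0.
pose t := e / (2 * T).
have t0 : 0 < t by rewrite /t divr_gt0 // mulr_gt0.
have td : forall i, `|t| * `|d i| < e.
  move=> i; rewrite gtr0_norm //.
  have dT : `|d i| < T.
    rewrite /T ltr_pwDr //.
    by have := @single_le m (fun k => `|d k|) i; apply.
  apply: (@lt_trans _ _ (t * T)); first by rewrite ltr_pM2l.
  have -> : t * T = e / 2 by rewrite /t; field; rewrite gt_eqF.
  by rewrite ltr_pdivrMr // ltr_pMr // ltr1n.
have Cqi : forall i : 'I_m, C (q i) by move=> i; apply: Cq.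
pose a (i : 'I_m) := x + t *: d i.
pose b (i : 'I_m) := x + (- t) *: d i.
have Ca : forall i, C (a i).
  move=> i; exact: (@FactA C x e Cx sub (q i) t (Cqi i) (td i)).
have Cb : forall i, C (b i).
  by move=> i; apply: (@FactA C x e Cx sub (q i) (- t) (Cqi i)); rewrite normrN; apply: td.
pose B := f x + \sum_i (f (a i) + f (b i)).
have S0 : 0 <= \sum_i (f (a i) + f (b i)).
  by apply: sumr_ge0 => i _; rewrite addr_ge0 ?f0.
have SB : \sum_i (f (a i) + f (b i)) <= B by rewrite /B lerDr f0.
have SS : forall i, f (a i) + f (b i) <= \sum_i (f (a i) + f (b i)).
  move=> i; apply: (@single_le m (fun k => f (a k) + f (b k)) i).
  by move=> k; rewrite addr_ge0 ?f0.
have Ba : forall i, f (a i) <= B.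
  move=> i; apply: (le_trans _ SB); apply: (le_trans _ (SS i)).
  by rewrite lerDl f0.
have Bb : forall i, f (b i) <= B.
  move=> i; apply: (le_trans _ SB); apply: (le_trans _ (SS i)).
  by rewrite lerDr f0.
have [K [K0 HK]] := @coord_bound m (pinvmx (Dm x m q)).
pose rho := t / (m%:R * K + 1).
have MK0 : 0 < m%:R * K + 1 by rewrite ltr_pwDr // mulr_ge0.
exists rho, B; split; first by rewrite divr_gt0.
move=> z Cz zx.
have [m0|mpos] := posnP m.
  subst m; have := span z Cz; rewrite [Dm x 0 q]flatmx0 => /submx0null.
  move/eqP; rewrite subr_eq0 => /eqP ->.
  by rewrite /B lerDl.
pose c := (z - x) *m pinvmx (Dm x m q).
have zE : z - x = \sum_i c 0 i *: d i.
  rewrite -(mulmxKpV (span z Cz)) -/c mulmx_sum_row.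
  by apply: eq_bigr => i _; rewrite /Dm rowK.
pose s (i : 'I_m) := m%:R * c 0 i.
have sb : forall i, `|s i| <= t.
  move=> i; rewrite /s normrM normr_nat.
  apply: (@le_trans _ _ (m%:R * (K * rho))).
    rewrite ler_wpM2l //; apply: (le_trans (HK _ i)); rewrite ler_wpM2l //.
    exact: ltW.
  have -> : m%:R * (K * rho) = (m%:R * K * t) / (m%:R * K + 1).
    by rewrite /rho !mulrA.
  rewrite ler_pdivrMr // mulrDr mulr1 mulrC lerDl ltW //.
pose u (i : 'I_m) := x + s i *: d i.
have Su : forall i, sublevel C f B (u i).
  move=> i; pose lam := (t + s i) / (2 * t).
  have := sb i; rewrite ler_norml => /andP [sl sr].
  have ts : 0 <= t + s i by lra.
  have lam0 : 0 <= lam by rewrite /lam; apply: divr_ge0 => //; rewrite mulr_ge0 // ltW.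
  have lam1 : lam <= 1.
    rewrite /lam ler_pdivrMr; last by rewrite mulr_gt0. 
    rewrite mul1r; lra.
  have := @convP _ (sc B) (a i) (b i) lam (conj (Ca i) (Ba i)) (conj (Cb i) (Bb i)) lam0 lam1.
  rewrite /a /b lin2.
  have -> : lam + (1 - lam) = 1 by rewrite addrC subrK.
  rewrite scale1r.
  have -> : lam * t + (1 - lam) * - t = s i.
    by rewrite /lam; field; rewrite gt_eqF.
  by [].
have mR : (m%:R : R) != 0 by rewrite pnatr_eq0 -lt0n.
have w0 : forall i : 'I_m, 0 <= (m%:R : R)^-1 by move=> _; rewrite invr_ge0 ler0n.
have ws : \sum_(i < m) (m%:R : R)^-1 = 1.
  by rewrite sumr_const card_ord -[_ *+ _]mulr_natr mulVf.
have := @fin_conv _ (sc B) m (fun=> m%:R^-1) u w0 ws Su.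
move=> /= H; suff E : \sum_i m%:R^-1 *: u i = z by move: H; rewrite E => -[].
rewrite /u (eq_bigr (fun i => m%:R^-1 *: x + (m%:R^-1 * s i) *: d i)); last first.
  by move=> i _; rewrite scalerDr scalerA.
rewrite big_split /= -scaler_suml ws.
rewrite scale1r -[z](subrK x) addrC zE; congr (_ + _).
by apply: eq_bigr => i _; rewrite /s mulKf.
Qed.

Lemma lin1 (x d : 'rV[R]_n) a b c :
  a *: x + c *: (x + b *: d) = (a + c) *: x + (c * b) *: d.
Proof. by rewrite scalerDr scalerA addrA scalerDl. Qed.

Lemma ar1 (d : R) : d <= 1 / 2 -> 0 <= 1 - d. Proof. lra. Qed.
Lemma ar2 (d : R) : 0 < d -> 1 - d <= 1. Proof. lra. Qed.
Lemma ar3 (a b c e : R) : a <= b -> b < c + e / 2 + e / 2 -> a < c + e. Proof. lra. Qed.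
Lemma ar4 (a b e : R) : 0 <= a -> a <= b - e -> e <= b. Proof. lra. Qed.
Lemma ar5 (b e : R) : e <= b -> e / 2 <= b - e / 2. Proof. lra. Qed.
Lemma ar6 (a b e : R) : 0 < e -> a <= b - e -> a <= b - e / 2. Proof. lra. Qed.
Lemma ar7 (a b e : R) : a <= b -> b < a - e / 2 + e / 2 -> False. Proof. lra. Qed.

Lemma powR_eps (a s eps : R) : 0 < s -> 0 < eps -> exists2 eta, 0 < eta &
  forall u, `|s - u| < eta -> `|s `^ a - u `^ a| < eps.
Proof.
move=> s0 e0.
have c : {for s, continuous (fun u : R => u `^ a)}.
  apply: differentiable_continuous; apply/derivable1_diffP.
  by apply: derivable_powR; rewrite in_itv /= andbT.
have := proj1 (@cvgrPdist_lt _ _ _ (nbhs s) _ (fun u : R => u `^ a) (s `^ a)) c eps e0.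
move=> /(_ (nbhs_filter s)) /nbhs_ballP [eta eta0 H].
by exists eta => // u su; apply: H; rewrite -ball_normE /=.
Qed.
End S.

Theorem mainTheorem8 (R : realType) (n : nat) (C : set 'rV[R]_n)
    (f : 'rV[R]_n -> R) (alpha : R) :
  is_cone C -> is_convex C ->
  (forall x, C x -> 0 <= f x) ->
  0 < alpha -> pos_homogeneous C alpha f ->
  sub_convex C f ->
  {within rel_interior C, continuous f}.
Proof.
move=> cone cvx f0 a0 hom sc.
apply/subspace_continuousP => x [Cx [e e0 sub]].
apply/cvgrPdist_lt => eps eps0.
suff [r r0 H] : exists2 r, 0 < r & forall y, `|x - y| < r -> C y -> `|f x - f y| < eps.
  rewrite /within /=; apply/nbhs_ballP; exists r => // y bxy [Cy _].
  by apply: H => //; move: bxy; rewrite -ball_normE.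
have [rho [B [rho0 HB]]] := @upper_bound R n C f x e f0 sc Cx e0 sub.
have fxB : f x <= B by apply: HB => //; rewrite subrr normr0.
have B0 : 0 <= B by apply: le_trans fxB; apply: f0.
pose ai := alpha^-1.
have powK : forall r, 0 <= r -> (r `^ ai) `^ alpha = r.
  by move=> r r0; rewrite -powRrM mulVf ?gt_eqF // powRr1.
pose t0 := (B + 1) `^ ai.
have t0p : 0 < t0 by rewrite powR_gt0 // ltr_pwDr.
have t0a : t0 `^ alpha = B + 1 by rewrite powK // addr_ge0.
have eps2 : 0 < eps / 2 by rewrite divr_gt0.
pose s1 := (f x + eps / 2) `^ ai.
have s1p : 0 < s1 by rewrite powR_gt0 // ltr_pwDr ?f0.
have s1a : s1 `^ alpha = f x + eps / 2 by rewrite powK // addr_ge0 ?f0 // ltW.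
pose m2 := Num.max (f x - eps / 2) (eps / 2).
have m2p : 0 < m2 by rewrite lt_max eps2 orbT.
pose s2 := m2 `^ ai.
have s2p : 0 < s2 by rewrite powR_gt0.
have s2a : s2 `^ alpha = m2 by rewrite powK // ltW.
have [eta1 eta10 H1] := @powR_eps R alpha _ _ s1p eps2.
have [eta2 eta20 H2] := @powR_eps R alpha _ _ s2p eps2.
pose k1 := eta1 / (`|t0 - s1| + 1).
pose k2 := eta2 / (`|t0 - s2| + 1).
have k10 : 0 < k1 by rewrite divr_gt0 // ltr_pwDr.
have k20 : 0 < k2 by rewrite divr_gt0 // ltr_pwDr.
pose del := Num.min (1 / 2) (Num.min k1 k2).
have del0 : 0 < del by rewrite lt_min divr_gt0 //= lt_min k10 k20.
have del12 : del <= 1 / 2 by rewrite ge_min lexx.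
have delk1 : del <= k1 by rewrite ge_min; apply/orP; right; rewrite ge_min lexx.
have delk2 : del <= k2 by rewrite ge_min; apply/orP; right; rewrite ge_min lexx orbT.
have dk : forall eta c : R, 0 < eta -> del <= eta / (`|c| + 1) -> del * `|c| < eta.
  move=> eta c et0 dle.
  have c1 : 0 < `|c| + 1 by rewrite ltr_pwDr.
  apply: (@lt_le_trans _ _ (del * (`|c| + 1))); first by rewrite ltr_pM2l // ltrDl.
  by rewrite -ler_pdivlMr.
pose mr := Num.min rho e.
have mr0 : 0 < mr by rewrite lt_min rho0 e0.
exists (del * mr); first by rewrite mulr_gt0.
move=> y xy Cy.
set v := y - x.
have vn : `|v| < del * mr by rewrite /v -normrN opprB.
have dv : `|del^-1| * `|v| < mr.
  rewrite gtr0_norm ?invr_gt0 // mulrC -ltr_pdivlMr ?invr_gt0 // invrK mulrC //.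
have dve : `|del^-1| * `|v| < e by apply: (lt_le_trans dv); rewrite ge_min lexx orbT.
have dvr : `|del^-1| * `|v| < rho by apply: (lt_le_trans dv); rewrite ge_min lexx.
pose z := x + del^-1 *: v.
pose w := x + (- del^-1) *: v.
have Cz : C z by apply: (@FactA R n C x e Cx sub y) => //.
have Cw : C w by apply: (@FactA R n C x e Cx sub y) => //; rewrite normrN.
have fz : f z <= t0 `^ alpha.
  have : `|z - x| < rho by rewrite /z addrC addKr normrZ.
  move=> /(HB z Cz) h; rewrite t0a; apply: (le_trans h); rewrite lerDl //.
have fw : f w <= t0 `^ alpha.
  have : `|w - x| < rho by rewrite /w addrC addKr normrZ normrN.
  move=> /(HB w Cw) h; rewrite t0a; apply: (le_trans h); rewrite lerDl //.
have yv : y = x + v by rewrite /v addrC subrK.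
rewrite ltr_distlC; apply/andP; split; last first.
  pose v1 := (1 - del) * s1 + (1 - (1 - del)) * t0.
  have yE : y = (1 - del) *: x + (1 - (1 - del)) *: z.
    rewrite /z lin1.
    have -> : (1 - del) + (1 - (1 - del)) = 1 by ring.
    have -> : (1 - (1 - del)) * del^-1 = 1 by field; rewrite gt_eqF.
    by rewrite !scale1r.
  have fxs : f x <= s1 `^ alpha by rewrite s1a lerDl ltW.
  have l0 : 0 <= 1 - del by apply: ar1.
  have l1 : 1 - del <= 1 by apply: ar2.
  have hq := @Qlem R n C f alpha cone f0 a0 hom sc x z (1 - del) s1 t0 Cx Cz l0 l1 s1p t0p fxs fz.
  rewrite -yE -/v1 in hq.
  have E : s1 - v1 = - (del * (t0 - s1)) by rewrite /v1; ring.
  have : `|s1 - v1| < eta1.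
    by rewrite E normrN normrM gtr0_norm //; apply: dk.
  move/H1; rewrite ltr_distlC => /andP [_ h].
  rewrite s1a in h; exact: (@ar3 R _ _ _ _ hq h).
case: (ltP (f x - eps) (f y)) => // hle.
have fy0 := f0 y Cy.
have fxe : eps <= f x by apply: (@ar4 R _ _ _ fy0 hle).
have m2E : m2 = f x - eps / 2 by rewrite /m2 max_l // ar5.
have fys : f y <= s2 `^ alpha by rewrite s2a m2E; apply: ar6.
pose l := (1 + del)^-1.
have dp : 0 < 1 + del by rewrite addr_gt0.
have l0 : 0 <= l by rewrite /l invr_ge0 ltW.
have l1 : l <= 1 by rewrite /l invf_le1 // lerDl ltW.
have xE : x = l *: y + (1 - l) *: w.
  rewrite /w [in RHS]yv -[in X in _ = _ *: (_ + X) + _](scale1r v) lin2.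
  have -> : l + (1 - l) = 1 by ring.
  have -> : l * 1 + (1 - l) * - del^-1 = 0 by rewrite /l; field; rewrite ?gt_eqF.
  by rewrite scale1r scale0r addr0.
have hq := @Qlem R n C f alpha cone f0 a0 hom sc y w l s2 t0 Cy Cw l0 l1 s2p t0p fys fw.
rewrite -xE in hq.
pose v2 := l * s2 + (1 - l) * t0.
have hl : 1 - l = del * l by rewrite /l; field; rewrite gt_eqF.
have E : s2 - v2 = - ((1 - l) * (t0 - s2)) by rewrite /v2; ring.
have : `|s2 - v2| < eta2.
  rewrite E normrN normrM (@ger0_norm _ (1 - l)); last by rewrite subr_ge0.
  apply: (@le_lt_trans _ _ (del * `|t0 - s2|)); last by apply: dk.
  rewrite ler_wpM2r // hl; rewrite -[X in _ <= X]mulr1 ler_wpM2l //; exact: ltW.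
move/H2; rewrite ltr_distlC => /andP [_ h].
rewrite s2a m2E -/v2 in h hq; case: (@ar7 R _ _ _ hq h).
Qed.
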